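(* Let $\boldsymbol\mu=(\mu_0,\dots,\mu_K)\in\mathcal L$ be a single-population instance in which every arm $a$ has distribution $\mathcal N(\mu_a,\sigma^2)$ with known variance $\sigma^2>0$, arm $0$ being the control. Define $\widetilde{\boldsymbol\mu}$ by $\widetilde\mu_k=2\mu_0-\mu_k$ if $\mu_k>\mu_0$ and $\widetilde\mu_k=\mu_k$ otherwise ($k=0,\dots,K$). Then $T^\star(\boldsymbol\mu)=T^\star_{\mathrm{BAI}}(\widetilde{\boldsymbol\mu})$.
   Context: For Gaussian arms with variance $\sigma^2$, $d(x,y)=(x-y)^2/(2\sigma^2)$. $\Sigma_{K+1}$ is the probability simplex. $\mathcal S(\boldsymbol\mu)=\{a\in[K]:\mu_a>\mu_0\}$, $\mathcal L=\{\boldsymbol\mu\in\mathbb R^{K+1}:\mu_a\neq\mu_0\ \forall a\in[K]\}$, $\mathrm{Alt}(\boldsymbol\mu)=\{\boldsymbol\lambda\in\mathcal L:\mathcal S(\boldsymbol\lambda)\neq\mathcal S(\boldsymbol\mu)\}$, and the (all-arms-better-than-control) characteristic time is $T^\star(\boldsymbol\mu)^{-1}=\sup_{\mathbf w\in\Sigma_{K+1}}\inf_{\boldsymbol\lambda\in\mathrm{Alt}(\boldsymbol\mu)}\sum_{a=0}^Kw_a d(\mu_a,\lambda_a)$. For a vector $\boldsymbol\nu\in\mathbb R^{K+1}$ with a unique maximal coordinate, the best-arm-identification characteristic time is $T^\star_{\mathrm{BAI}}(\boldsymbol\nu)^{-1}=\sup_{\mathbf w\in\Sigma_{K+1}}\inf_{\boldsymbol\lambda\in\mathbb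 R^{K+1}:\ \operatorname{argmax}\boldsymbol\lambda\neq\operatorname{argmax}\boldsymbol\nu}\sum_{a=0}^Kw_a d(\nu_a,\lambda_a)$, where the infimum is over $\boldsymbol\lambda$ whose set of maximizing coordinates is not $\{\operatorname{argmax}\boldsymbol\nu\}$. *)

(* Defs.v *)
From HB Require Import structures.
From mathcomp Require Import all_boot all_order all_algebra.
From mathcomp Require Import all_classical all_reals all_analysis.
Set Implicit Arguments. Unset Strict Implicit. Unset Printing Implicit Defensive.
Import Order.TTheory GRing.Theory Num.Theory.
Local Open Scope classical_set_scope.
Local Open Scope ring_scope.

Section Defs.
Variables (R : realType) (K : nat).
Notation arm := 'I_K.+1.  (* arms 0..K, arm 0 = control (ord0) *)

Definition gauss_kl (sigma x y : R) : R := (x - y) ^+ 2 / (2 * sigma ^+ 2).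

Definition simplex : set (arm -> R) :=
  [set w | (forall a, 0 <= w a) /\ \sum_(a : arm) w a = 1].

Definition better_set (mu : arm -> R) : {set arm} :=
  [set a : arm | (a != ord0) && (mu ord0 < mu a)].

Definition inL (mu : arm -> R) : Prop := forall a : arm, a != ord0 -> mu a != mu ord0.

Definition Alt (mu : arm -> R) : set (arm -> R) :=
  [set lam | inL lam /\ better_set lam != better_set mu].

Definition wdiv (sigma : R) (w mu lam : arm -> R) : R :=
  \sum_(a : arm) w a * gauss_kl sigma (mu a) (lam a).

Definition Tstar_inv (sigma : R) (mu : arm -> R) : \bar R :=
  ereal_sup [set ereal_inf [set (wdiv sigma w mu lam)%:E | lam in Alt mu]
            | w in simplex].

Definition argmax_set (nu : arm -> R) : {set arm} :=
  [set a : arm | [forall b : arm, nu b <= nu a]].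

Definition Alt_BAI (nu : arm -> R) : set (arm -> R) :=
  [set lam | argmax_set lam != argmax_set nu].

Definition TstarBAI_inv (sigma : R) (nu : arm -> R) : \bar R :=
  ereal_sup [set ereal_inf [set (wdiv sigma w nu lam)%:E | lam in Alt_BAI nu]
            | w in simplex].

Definition reflect_mu (mu : arm -> R) : arm -> R :=
  fun k => if mu ord0 < mu k then 2 * mu ord0 - mu k else mu k.
End Defs.

(* Main.v *)
Require Import Defs.
From HB Require Import structures.
From mathcomp Require Import all_boot all_order all_algebra.
From mathcomp Require Import all_classical all_reals all_analysis.
From mathcomp Require Import ring lra.
Import Order.TTheory GRing.Theory Num.Theory.
Local Open Scope ring_scope.

Section Aux.

Variables (R : realType) (K : nat).
Notation arm := 'I_K.+1.

Definition refl (b : bool) (m x : R) := if b then 2 * m - x else x.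

Lemma refl_sq b m x y : (refl b m x - refl b m y) ^+ 2 = (x - y) ^+ 2.
Proof. by case: b; rewrite /refl //; ring. Qed.

Lemma refl_m b m : refl b m m = m.
Proof. by case: b; rewrite /refl //; ring. Qed.

Lemma refl_inv b m x : refl b m (refl b m x) = x.
Proof. by case: b; rewrite /refl //; ring. Qed.

Lemma kl_refl (s : R) b m x y : gauss_kl s (refl b m x) (refl b m y) = gauss_kl s x y.
Proof. by rewrite /gauss_kl refl_sq. Qed.

Lemma kl_same (s x : R) : gauss_kl s x x = 0.
Proof. by rewrite /gauss_kl subrr expr0n /= mul0r. Qed.

Lemma kl_ge0 (s x y : R) : 0 <= gauss_kl s x y.
Proof. by rewrite /gauss_kl divr_ge0 // ?sqr_ge0 // mulr_ge0 // sqr_ge0. Qed.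

Lemma sum_split (f : arm -> R) (k : arm) : k != ord0 ->
  \sum_a f a = f ord0 + f k + \sum_(a | (a != ord0) && (a != k)) f a.
Proof. by move=> k0; rewrite (bigD1 ord0) //= (bigD1 k k0) /= addrA. Qed.

Lemma argmax_unique (f : arm -> R) :
  (forall k, k != ord0 -> f k < f ord0) -> argmax_set f = [set ord0]%SET.
Proof.
move=> H; apply/setP => a; rewrite !inE; apply/forallP/eqP => [h|->].
- case: (eqVneq a ord0) => // a0; have := h ord0; have := H a a0.
  by move=> l1 l2; rewrite leNgt l1 in l2.
- move=> b; case: (eqVneq b ord0) => [->|b0]; [exact: lexx | exact: ltW (H b b0)].
Qed.

Lemma nu_lt (mu : arm -> R) : inL mu ->
  forall k, k != ord0 -> reflect_mu mu k < reflect_mu mu ord0.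
Proof.
move=> H k k0; have := H k k0; rewrite /reflect_mu ltxx.
case: (ltrgtP (mu ord0) (mu k)) => h //= _; lra.
Qed.

Lemma w_le1 (w : arm -> R) a : simplex w -> w a <= 1.
Proof.
move=> [w0 w1]; rewrite -w1 (bigD1 a) //= lerDl; exact: sumr_ge0.
Qed.


Lemma dir1 (sigma : R) (mu : arm -> R) (w : arm -> R) lam :
  0 < sigma -> inL mu -> simplex w -> Alt mu lam ->
  exists2 lam', Alt_BAI (reflect_mu mu) lam' &
    wdiv sigma w (reflect_mu mu) lam' <= wdiv sigma w mu lam.
Proof.
move=> s0 Lmu [wge0 w1] [Llam Hne].
have [k hk] : exists k, (k \in better_set lam) != (k \in better_set mu).
  case: (pselect (exists k, (k \in better_set lam) != (k \in better_set mu))) => // hn.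
  exfalso; move/negP: Hne; apply; apply/eqP/setP => k.
  by case: (boolP ((k \in better_set lam) == (k \in better_set mu))) => [/eqP//|h];
    exfalso; apply: hn; exists k.
have k0 : k != ord0 by apply: contraNneq hk => ->; rewrite !inE eqxx.
rewrite !inE k0 /= in hk.
set b := mu ord0 < mu k; set m := mu ord0.
pose lam' a := if a == ord0 then refl b m (lam ord0)
               else if a == k then refl b m (lam k) else reflect_mu mu a.
have lk := Llam k k0.
have hlt : lam' ord0 < lam' k.
  rewrite /lam' eqxx (negbTE k0) eqxx /refl.
  rewrite -/b in hk; have [hb|hb] := boolP b; rewrite ?hb ?(negbTE hb) /= in hk *.
  - have h1 : ~~ (lam ord0 < lam k) by move: hk; case: (lam ord0 < lam k).
    have : lam k < lam ord0 by rewrite lt_neqAle lk leNgt.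
    by move=> h; lra.
  - by move: hk; case: ltP.
exists lam'.
  rewrite /Alt_BAI /=; apply/negP => /eqP E.
  have : ord0 \in argmax_set (reflect_mu mu).
    by rewrite (argmax_unique _ (nu_lt _ Lmu)) inE.
  by rewrite -E inE => /forallP /(_ k); rewrite leNgt hlt.
rewrite /wdiv (sum_split _ _ k0) (sum_split _ _ k0).
rewrite big1 ?addr0; last first.
  by move=> a /andP[a0 ak]; rewrite /lam' (negbTE a0) (negbTE ak) kl_same mulr0.
rewrite -[X in X <= _]addr0; apply: lerD; last first.
  by apply: sumr_ge0 => a _; rewrite mulr_ge0 ?kl_ge0.
rewrite /lam' eqxx (negbTE k0) eqxx.
have -> : reflect_mu mu ord0 = refl b m m by rewrite refl_m /reflect_mu ltxx.
have -> : reflect_mu mu k = refl b m (mu k) by [].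
by rewrite !kl_refl.
Qed.

Lemma dir2 (sigma : R) (mu : arm -> R) (w : arm -> R) lam' e :
  0 < sigma -> inL mu -> simplex w -> Alt_BAI (reflect_mu mu) lam' -> 0 < e ->
  exists2 lam, Alt mu lam &
    wdiv sigma w mu lam <= wdiv sigma w (reflect_mu mu) lam' + e.
Proof.
move=> s0 Lmu sw Hne e0; have [wge0 w1] := sw.
have [k [k0 hk]] : exists k, k != ord0 /\ lam' ord0 <= lam' k.
  case: (pselect (exists k, k != ord0 /\ lam' ord0 <= lam' k)) => // hn.
  exfalso; move/negP: Hne; apply; apply/eqP.
  rewrite (argmax_unique _ (nu_lt _ Lmu)) argmax_unique // => k k0.
  by rewrite ltNge; apply/negP => h; apply: hn; exists k.
set b := mu ord0 < mu k; set m := mu ord0.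
set nu := reflect_mu mu.
pose t j := lam' ord0 - refl b m (mu j).
set A := nu ord0 - lam' ord0; set B := nu k - lam' k.
set C := 2 * `|A| + 2 * `|B| + 2.
have C0 : 0 < C by rewrite /C; have := normr_ge0 A; have := normr_ge0 B; lra.
set ec := e * (2 * sigma ^+ 2).
have ec0 : 0 < ec by rewrite /ec mulr_gt0 // mulr_gt0 // exprn_gt0.
have Hall : \forall d \near at_right (0:R), forall j : arm, lam' ord0 - d != refl b m (mu j).
  apply: filter_forall => j; case: (ltP 0 (t j)) => h.
  - by apply: filterS (nbhs_right_lt h) => d /= hd; apply/eqP; rewrite /t in hd; lra.
  - by apply: filterS (nbhs_right_gt 0) => d /= hd; apply/eqP; rewrite /t in h; lra.
have ecC : 0 < ec / C by rewrite divr_gt0.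
have [d [[[d0 d1] d2] dj]] := filter_ex (filterI (filterI (filterI
  (nbhs_right_gt (0:R)) (nbhs_right_lt ltr01)) (nbhs_right_lt ecC)) Hall).
pose lam a := if a == ord0 then refl b m (lam' ord0 - d)
              else if a == k then refl b m (lam' k + d) else mu a.
have hlt : lam' ord0 - d < lam' k + d by lra.
exists lam.
  split.
  - move=> a a0; rewrite /lam (negbTE a0) eqxx; case: (eqVneq a k) => [_|ak].
    + rewrite /refl; have [hb|hb] := boolP b; rewrite ?hb ?(negbTE hb); apply/eqP; lra.
    + apply/eqP => h; move: (dj a); rewrite h refl_inv eqxx //.
  - have Hl : (lam ord0 < lam k) = ~~ b.
      rewrite /lam eqxx (negbTE k0) eqxx /refl.
      have [hb|hb] := boolP b; rewrite ?hb ?(negbTE hb) /=.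
      + by apply/negbTE; rewrite -leNgt; lra.
      + by apply/idP; lra.
    apply/negP => /eqP E; have := congr1 (fun S : {set arm} => k \in S) E.
    rewrite /= !inE k0 /= Hl -/b; have [hb|hb] := boolP b; rewrite ?hb ?(negbTE hb) /=; done.
rewrite /wdiv (sum_split _ _ k0) (sum_split _ _ k0).
rewrite big1 ?addr0; last first.
  by move=> a /andP[a0 ak]; rewrite /lam (negbTE a0) (negbTE ak) kl_same mulr0.
apply: (le_trans (y := w ord0 * gauss_kl sigma (nu ord0) (lam' ord0) +
   w k * gauss_kl sigma (nu k) (lam' k) + e)); last first.
  by rewrite lerD2r lerDl; apply: sumr_ge0 => a _; rewrite mulr_ge0 ?kl_ge0.
rewrite /lam eqxx (negbTE k0) eqxx.
have -> : mu ord0 = refl b m (nu ord0) by rewrite /nu /reflect_mu ltxx refl_m.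
have -> : mu k = refl b m (nu k) by rewrite refl_inv.
rewrite !kl_refl /gauss_kl.
have w0le := w_le1 _ ord0 sw; have wkle := w_le1 _ k sw.
have w0ge := wge0 ord0; have wkge := wge0 k.
have hA : nu ord0 - (lam' ord0 - d) = A + d by rewrite /A; ring.
have hB : nu k - (lam' k + d) = B - d by rewrite /B; ring.
rewrite hA hB.
have s2 : 0 < 2 * sigma ^+ 2 by rewrite mulr_gt0 // exprn_gt0.
set c := 2 * sigma ^+ 2.
have ee : e = ec / c by rewrite /ec mulfK // gt_eqF.
rewrite -/A -/B ee !mulrA -!mulrDl ler_pM2r ?invr_gt0 //.
have dC : d * C < ec by rewrite -ltr_pdivlMr.
have nA := ler_norm A; have nA' := ler_normr A.
have nB := ler_norm B; have nB' := ler_normr B.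
rewrite /C in dC.
have h1 : 2 * A * d + d ^+ 2 <= d * (2 * `|A| + 1).
  have : 0 <= d * (`|A| - A) by rewrite mulr_ge0 ?subr_ge0 ?ler_norm ?ltW.
  have : 0 <= d * (1 - d) by rewrite mulr_ge0 ?subr_ge0 ?ltW.
  lra.
have h2 : - 2 * B * d + d ^+ 2 <= d * (2 * `|B| + 1).
  have hB0 : 0 <= `|B| + B by have := ler_norm (- B); rewrite normrN; lra.
  have : 0 <= d * (`|B| + B) by apply: mulr_ge0 => //; apply: ltW.
  have : 0 <= d * (1 - d) by rewrite mulr_ge0 ?subr_ge0 ?ltW.
  lra.
have g1 : 0 <= d * (2 * `|A| + 1) by rewrite mulr_ge0 ?ltW // addr_ge0 // mulr_ge0.
have g2 : 0 <= d * (2 * `|B| + 1) by rewrite mulr_ge0 ?ltW // addr_ge0 // mulr_ge0.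
have h1' : w ord0 * (2 * A * d + d ^+ 2) <= d * (2 * `|A| + 1).
  apply: le_trans (_ : w ord0 * (d * (2 * `|A| + 1)) <= _).
    exact: ler_wpM2l.
  by rewrite ler_piMl.
have h2' : w k * (- 2 * B * d + d ^+ 2) <= d * (2 * `|B| + 1).
  apply: le_trans (_ : w k * (d * (2 * `|B| + 1)) <= _).
    exact: ler_wpM2l.
  by rewrite ler_piMl.
have -> : w ord0 * (A + d) * (A + d) + w k * (B - d) * (B - d) =
  w ord0 * A * A + w k * B * B + (w ord0 * (2 * A * d + d ^+ 2) + w k * (- 2 * B * d + d ^+ 2)).
  by ring.
rewrite lerD2l; lra.
Qed.

End Aux.

Theorem lemma1 (R : realType) (K : nat) (sigma : R) (mu : 'I_K.+1 -> R) :
  0 < sigma -> inL mu ->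
  Tstar_inv sigma mu = TstarBAI_inv sigma (reflect_mu mu).
Proof.
move=> s0 Lmu.
have H : forall w, simplex w ->
  ereal_inf [set (wdiv sigma w mu lam)%:E | lam in Alt mu] =
  ereal_inf [set (wdiv sigma w (reflect_mu mu) lam)%:E | lam in Alt_BAI (reflect_mu mu)].
  move=> w sw; apply/eqP; rewrite eq_le; apply/andP; split.
  - apply: le_ereal_inf_tmp => _ [lam' Hl <-].
    apply/lee_addgt0Pr => e e0.
    have [lam Hlam Hle] := @dir2 R K sigma mu w lam' e s0 Lmu sw Hl e0.
    apply: ge_ereal_inf; exists (wdiv sigma w mu lam)%:E; first by exists lam.
    by rewrite -EFinD lee_fin.
  - apply: le_ereal_inf_tmp => _ [lam Hl <-].
    have [lam' Hlam' Hle] := @dir1 R K sigma mu w lam s0 Lmu sw Hl.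
    apply: ge_ereal_inf; exists (wdiv sigma w (reflect_mu mu) lam')%:E; first by exists lam'.
    by rewrite lee_fin.
rewrite /Tstar_inv /TstarBAI_inv; congr ereal_sup.
apply/seteqP; split => _ [w sw <-]; exists w => //; by rewrite H.
Qed.
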